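(* Let $F,G:\mathbb{F}_{2^n}\to\mathbb{F}_{2^n}$ be CCZ-equivalent via the affine permutation $\mathcal{A}(u)=\begin{pmatrix}\mathcal{A}_{11}&\mathcal{A}_{12}\\ \mathcal{A}_{21}&\mathcal{A}_{22}\end{pmatrix}u+\begin{pmatrix}C\\ D\end{pmatrix}$ of $\mathbb{F}_{2^n}\times\mathbb{F}_{2^n}$, i.e. $\{(x,G(x)):x\in\mathbb{F}_{2^n}\}=\{\mathcal{A}(x,F(x)):x\in\mathbb{F}_{2^n}\}$. Then for all $a,b,c,d\in\mathbb{F}_{2^n}$, $$\mathrm{EBCT}_F(a,b,c,d)=\mathrm{EBCT}_G(\alpha,\beta,\gamma,\delta),$$ where $\alpha=\mathcal{A}_{12}b+\mathcal{A}_{11}a$, $\beta=\mathcal{A}_{22}b+\mathcal{A}_{21}a$, $\gamma=\mathcal{A}_{12}d+\mathcal{A}_{11}c$, $\delta=\mathcal{A}_{22}d+\mathcal{A}_{21}c$. Since the map $(a,b,c,d)\mapsto(\alpha,\beta,\gamma,\delta)$ is a bijection of $\mathbb{F}_{2^n}^4$, the multiset of EBCT entries (the EBCT spectrum) is preserved under CCZ-equivalence.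
   Context: Elements of $\mathbb{F}_{2^n}$ are identified with vectors of $\mathbb{F}_2^n$; $\mathcal{A}_{ij}:\mathbb{F}_{2^n}\to\mathbb{F}_{2^n}$ are $\mathbb{F}_2$-linear maps, $C,D\in\mathbb{F}_{2^n}$, and $\mathcal{A}$ is a bijection of $\mathbb{F}_{2^n}\times\mathbb{F}_{2^n}$. For any function $H:\mathbb{F}_{2^n}\to\mathbb{F}_{2^n}$ (not necessarily a permutation), $$\mathrm{EBCT}_H(a,b,c,d)=\left|\left\{X\in\mathbb{F}_{2^n} : H(X)+H(X+a)=b,\ H(X)+H(X+c)=d,\ H(X+a+c)+H(X+a)=d\right\}\right|.$$ *)

(* Defs.v *)
From mathcomp Require Import all_boot all_order all_algebra all_field.
Set Implicit Arguments. Unset Strict Implicit. Unset Printing Implicit Defensive.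
Import GRing.Theory.
Local Open Scope ring_scope.

Definition EBCT (K : finFieldType) (H : K -> K) (a b c d : K) : nat :=
  #|[set X : K | [&& H X + H (X + a) == b,
                     H X + H (X + c) == d &
                     H (X + a + c) + H (X + a) == d]]|.

Definition affA (K : finFieldType) (A11 A12 A21 A22 : K -> K) (C D : K)
  (p : K * K) : K * K :=
  (A11 p.1 + A12 p.2 + C, A21 p.1 + A22 p.2 + D).

(* F_2-linearity of a map K -> K (K of characteristic 2): additivity. *)
Definition F2linear (K : finFieldType) (f : K -> K) : Prop :=
  forall x y, f (x + y) = f x + f y.

(* Main.v *)
Require Import Defs.
From mathcomp Require Import all_boot all_order all_algebra all_field.
From mathcomp Require Import ring.
Import GRing.Theory.
Local Open Scope ring_scope.

Lemma part1_lem (n : nat) (K : finFieldType) (hK : #|K| = (2 ^ n)%N)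
  (F G : K -> K) (A11 A12 A21 A22 : K -> K) (C D : K)
  (l11 : F2linear A11) (l12 : F2linear A12)
  (l21 : F2linear A21) (l22 : F2linear A22)
  (hbij : bijective (affA A11 A12 A21 A22 C D))
  (hccz : [set (x, G x) | x : K] = [set affA A11 A12 A21 A22 C D (x, F x) | x : K]) :
  forall a b c d : K,
     EBCT F a b c d =
     EBCT G (A12 b + A11 a) (A22 b + A21 a) (A12 d + A11 c) (A22 d + A21 c).
Proof.
have ch2 : (2 \in [pchar K])%N by apply: (card_finPcharP hK).
have eq2 : forall x y b : K, (x + y == b) = (y == x + b).
  move=> x y b; apply/eqP/eqP => [<-|->]; by rewrite addKr_pchar2.
have eq2' : forall x y b : K, (x + y == b) = (x == y + b).
  by move=> x y b; rewrite addrC eq2.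
have ainj : injective (affA A11 A12 A21 A22 C D) by apply: bij_inj.
pose phi X := A11 X + A12 (F X) + C.
have hG : forall X, G (phi X) = A21 X + A22 (F X) + D.
  move=> X.
  have : affA A11 A12 A21 A22 C D (X, F X) \in [set (x, G x) | x : K].
    by rewrite hccz; apply: imset_f.
  by case/imsetP => x _; rewrite /affA /= => -[Ex EG]; rewrite /phi Ex.
have hA : forall X, affA A11 A12 A21 A22 C D (X, F X) = (phi X, G (phi X)).
  by move=> X; rewrite hG.
have key : forall X u v, (F (X + u) == F X + v) =
   (G (phi X + (A11 u + A12 v)) == G (phi X) + (A21 u + A22 v)).
  move=> X u v; apply/eqP/eqP => [E|E].
    have := hG (X + u); rewrite /phi E l11 l12 l21 l22 -/(phi X).
    have -> : A11 X + A11 u + (A12 (F X) + A12 v) + C = phi X + (A11 u + A12 v).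
      by rewrite /phi; ring.
    by move=> ->; rewrite hG; ring.
  have : (phi X + (A11 u + A12 v), G (phi X + (A11 u + A12 v))) \in [set (x, G x) | x : K].
    by apply: imset_f.
  rewrite hccz => /imsetP [X' _] HX'.
  have HH : affA A11 A12 A21 A22 C D (X + u, F X + v) =
            affA A11 A12 A21 A22 C D (X', F X').
    rewrite -HX' E /affA /= l11 l12 l21 l22 hG /phi; congr (_, _).
      by ring.
    by ring.
  by case: (ainj _ _ HH) => <- ->.
have phiS : forall X u v, F (X + u) = F X + v -> phi (X + u) = phi X + (A11 u + A12 v).
  by move=> X u v E; rewrite /phi E l11 l12; ring.
have phiinj : forall X1 X2, phi X1 = phi X2 -> X1 = X2.
  move=> X1 X2 E; have H : (X1, F X1) = (X2, F X2) by apply: ainj; rewrite !hA E.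
  by case: H.
have phisurj : forall Y, exists X, Y = phi X.
  move=> y0; have : (y0, G y0) \in [set (x, G x) | x : K] by apply: imset_f.
  rewrite hccz => /imsetP [X0 _]; rewrite hA => -[-> _]; by exists X0.

  move=> a b c d; rewrite /EBCT -(card_imset _ phiinj); apply: eq_card => Y; case: (phisurj Y) => X ->; rewrite (mem_imset _ _ phiinj) !inE.
  rewrite [F X + F (X + a) == b]eq2 [F X + F (X + c) == d]eq2 [F (X + a + c) + _ == d]eq2'.
  rewrite [G (phi X) + _ == _]eq2 [G (phi X) + _ == _]eq2 [G (_ + _ + _) + _ == _]eq2'.
  rewrite (addrC (A12 b)) (addrC (A22 b)) (addrC (A12 d)) (addrC (A22 d)).
  rewrite [F (X + c) == _]key.
  case E1: (F (X + a) == F X + b); have E1' := E1; rewrite key in E1'; rewrite E1' //.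
  by move/eqP: E1 => E1; rewrite (key (X + a) c d) (phiS _ _ _ E1).
Qed.

Theorem mainTheorem3 (n : nat) (K : finFieldType) (hK : #|K| = (2 ^ n)%N)
  (F G : K -> K) (A11 A12 A21 A22 : K -> K) (C D : K)
  (l11 : F2linear A11) (l12 : F2linear A12)
  (l21 : F2linear A21) (l22 : F2linear A22)
  (hbij : bijective (affA A11 A12 A21 A22 C D))
  (hccz : [set (x, G x) | x : K] = [set affA A11 A12 A21 A22 C D (x, F x) | x : K]) :
  (forall a b c d : K,
     EBCT F a b c d =
     EBCT G (A12 b + A11 a) (A22 b + A21 a) (A12 d + A11 c) (A22 d + A21 c))
  /\
  (* the EBCT spectrum (multiset of entries) is preserved *)
  (forall k : nat,
     #|[set p : K * K * K * K | EBCT F p.1.1.1 p.1.1.2 p.1.2 p.2 == k]| =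
     #|[set p : K * K * K * K | EBCT G p.1.1.1 p.1.1.2 p.1.2 p.2 == k]|).
Proof.
have part1 := @part1_lem n K hK F G A11 A12 A21 A22 C D l11 l12 l21 l22 hbij hccz.
have ch2 : (2 \in [pchar K])%N by apply: (card_finPcharP hK).
have ainj : injective (affA A11 A12 A21 A22 C D) by apply: bij_inj.
split => // k.
pose Psi (p : K * K * K * K) :=
  (A12 p.1.1.2 + A11 p.1.1.1, A22 p.1.1.2 + A21 p.1.1.1,
   A12 p.2 + A11 p.1.2, A22 p.2 + A21 p.1.2).
have Linj : forall a b a' b', A12 b + A11 a = A12 b' + A11 a' ->
   A22 b + A21 a = A22 b' + A21 a' -> a = a' /\ b = b'.
  move=> a b a' b' E1 E2.
  have : affA A11 A12 A21 A22 C D (a, b) = affA A11 A12 A21 A22 C D (a', b').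
    by rewrite /affA /= (addrC (A11 a)) E1 (addrC (A21 a)) E2 (addrC (A12 b')) (addrC (A22 b')).
  by move/ainj => [-> ->].
have Psiinj : injective Psi.
  move=> [[[a b] c] d] [[[a' b'] c'] d'] [E1 E2 E3 E4].
  case: (Linj _ _ _ _ E1 E2) => -> ->; by case: (Linj _ _ _ _ E3 E4) => -> ->.
rewrite -[RHS](card_preimset _ Psiinj); apply: eq_card => p.
rewrite !inE; case: p => [[[a b] c] d] /=; exact: (congr1 (fun m => m == k) (part1 a b c d)).
Qed.
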